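(* Let $p$ be a prime and $f>1$ an integer, and let $l=f$ if $f$ is odd and $l=2f$ if $f$ is even. Define $\boldsymbol{\mu}=(\mu_0(x),\dots,\mu_{f-1}(x))$ by $\mu_0(x)=x-1$, $\mu_1(x)=p-2-x$, and $\mu_j(x)=p-1-x$ for $2\leq j\leq f-1$, and $\boldsymbol{\mu}^{(k)}=g^{k-1}\boldsymbol{\mu}\circ g^{k-2}\boldsymbol{\mu}\circ\cdots\circ g\boldsymbol{\mu}\circ\boldsymbol{\mu}$ for $1\leq k\leq l$. Then the $2l-1$ tuples $\boldsymbol{\mu}^{(1)},\boldsymbol{\mu}^{(2)},\dots,\boldsymbol{\mu}^{(l)},g\boldsymbol{\mu}^{(1)},g\boldsymbol{\mu}^{(2)},\dots,g\boldsymbol{\mu}^{(l-1)}$ are pairwise distinct elements of $(\mathbb{Z}\pm x)^f$.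
   Context: $(\mathbb{Z}\pm x)^f$ denotes the set of $f$-tuples $(\lambda_0(x),\dots,\lambda_{f-1}(x))$ of polynomials of the form $a\pm x$ with $a\in\mathbb{Z}$. Composition is componentwise: $\boldsymbol{\lambda}\circ\boldsymbol{\lambda}'=(\lambda_0(\lambda'_0(x)),\dots,\lambda_{f-1}(\lambda'_{f-1}(x)))$. The cyclic shift $g$ acts by $(g\boldsymbol{\lambda})_j=\lambda_{j+1}$, indices modulo $f$. *)

(* Defs.v *)
From mathcomp Require Import all_boot all_order all_algebra.
Set Implicit Arguments. Unset Strict Implicit. Unset Printing Implicit Defensive.
Import GRing.Theory Num.Theory.
Local Open Scope ring_scope.

Definition ptuple (f : nat) := {ffun 'I_f -> {poly int}}.

Definition in_Zpmx (f : nat) (lam : ptuple f) : Prop :=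
  forall j : 'I_f, exists a : int, lam j = a%:P + 'X \/ lam j = a%:P - 'X.

Definition pcomp (f : nat) (lam lam' : ptuple f) : ptuple f :=
  [ffun j => (lam j) \Po (lam' j)].

Definition gshift (f : nat) (lam : ptuple f) : ptuple f :=
  [ffun j => lam (ordS j)].

Definition gpow (f : nat) (k : nat) (lam : ptuple f) : ptuple f :=
  iter k (@gshift f) lam.

Definition mu (p f : nat) : ptuple f :=
  [ffun j : 'I_f => if val j == 0%N then 'X - 1
                    else if val j == 1%N then (p%:Z - 2)%:P - 'X
                    else (p%:Z - 1)%:P - 'X].

(* mu^(k) = g^{k-1} mu o ... o g mu o mu, for k >= 1 (mu^(0) unused). *)
Fixpoint muk (p f : nat) (k : nat) : ptuple f :=
  match k with
  | 0%N => mu p f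
  | 1%N => mu p f
  | k'.+1 => pcomp (gpow k' (mu p f)) (muk p f k')
  end.

Definition ell (f : nat) : nat := if odd f then f else (2 * f)%N.

Definition mu_list (p f : nat) : seq (ptuple f) :=
  [seq muk p f k | k <- iota 1 (ell f)] ++
  [seq gshift (muk p f k) | k <- iota 1 (ell f).-1].

(* Main.v *)
Require Import Defs.
From mathcomp Require Import all_boot all_order all_algebra.
From mathcomp Require Import zify ring.
Import GRing.Theory.
Local Open Scope ring_scope.

Definition aff := (bool * int)%type.
Definition acomp (u v : aff) : aff :=
  (u.1 (+) v.1, u.2 + (if u.1 then - v.2 else v.2)).
Definition aid : aff := (false, 0).
Definition mm (f i : nat) : aff :=
  if (i %% f == 0)%N then (false, -1) else if (i %% f == 1)%N then (true, -1) else (true, 0).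
Fixpoint Fm (f j k : nat) : aff :=
  match k with 0%N => aid | k'.+1 => acomp (mm f (j + k')) (Fm f j k') end.
Definition PP f n := Fm f 0 n.

Lemma acompA u v w : acomp u (acomp v w) = acomp (acomp u v) w.
Proof.
case: u v w => [[] a] [[] b] [[] c]; rewrite /acomp /=; congr pair; ring.
Qed.

Lemma acomp1 u : acomp u aid = u.
Proof. by case: u => [[] a]; rewrite /acomp /= ?oppr0 addr0. Qed.

Lemma Fm_P f j k : acomp (Fm f j k) (PP f j) = PP f (j + k).
Proof.
elim: k => [|k IH] /=; first by rewrite addn0; case: (PP f j) => b x; rewrite /acomp /= add0r.
by rewrite -acompA IH /PP /= addnS.
Qed.

Lemma Fm_mod f j k : Fm f (j %% f) k = Fm f j k.
Proof. elim: k => //= k ->; by rewrite /mm !modnDml. Qed.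

Lemma modS1 f n : (1 < f)%N -> (n.+1 %% f == 1)%N = (n %% f == 0)%N.
Proof.
move=> hf; rewrite modnS; case: ifP => h.
  apply/esym/negbTE; apply/negP => /eqP h2.
  have : (f %| n)%N by apply/eqP.
  move=> d; have := dvdn_sub h d; rewrite subSnn dvdn1 => /eqP; lia.
by rewrite eqSS.
Qed.

Lemma PP_t f n : (1 < f)%N -> (PP f n).2 = if (n %% f == 1)%N then -1 else 0.
Proof.
move=> hf; elim: n => [|n IH] /=.
  by rewrite /PP /=; case: f hf => [|[|f]].
rewrite /PP /= -/(PP f n) add0n modS1 // /mm.
case: eqP => [h0|h0]; rewrite /= IH.
  by rewrite h0 /= addr0.
case: eqP => [h1|h1] /=.
  by rewrite opprK addrN.
by rewrite subrr.
Qed.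

Lemma PP_s f n : (PP f n.+1).1 = (PP f n).1 (+) (n %% f != 0)%N.
Proof.
rewrite /PP /= add0n /mm; case: eqP => [h|h] /=; first by case: (Fm f 0 n).1.
by case: ifP; case: (Fm f 0 n).1.
Qed.

Lemma PP_small f n : (n < f)%N -> (PP f n.+1).1 = odd n.
Proof.
elim: n => [|n IH] h; first by rewrite PP_s /PP /= mod0n.
rewrite PP_s IH ?(ltnW h) // modn_small //=.
by case: (odd n).
Qed.

Lemma PP_f f n : (1 < f)%N -> ~~ odd f -> (PP f (n + f)).1 = ~~ (PP f n).1.
Proof.
move=> hf he; elim: n => [|n IH].
  rewrite add0n /PP /=; case: f hf he => // f' _ he.
  by rewrite -/(PP f'.+1 f'.+1) PP_small //=; move: he => /=; case: (odd f').
rewrite addSn PP_s IH PP_s modnDr.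
by case: (PP f n).1; case: (n %% f != 0)%N.
Qed.

Lemma PP1 f : (1 < f)%N -> PP f 1 = (false, -1).
Proof. by move=> hf; rewrite /PP /= /mm mod0n. Qed.
Lemma PP2 f : (1 < f)%N -> PP f 2 = (true, 0).
Proof.
move=> hf; rewrite /PP /= /mm mod0n /= modn_small //=.
Qed.

Lemma tvals f n : (1 < f)%N -> (PP f n).2 = -1 \/ (PP f n).2 = 0.
Proof. by move=> hf; rewrite PP_t //; case: ifP; auto. Qed.

Lemma LA f a b : (1 < f)%N -> (1 <= a)%N -> (a < b)%N -> (b <= ell f)%N ->
  (forall j, Fm f j a = Fm f j b) -> False.
Proof.
move=> hf ha hab hb H.
have HP j : PP f (j + a) = PP f (j + b) by rewrite -!Fm_P H.
set j0 := (f - a %% f).+1.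
have hr : (a %% f < f)%N by rewrite ltn_pmod //; lia.
have e1 : ((j0 + a) %% f == 1)%N.
  rewrite /j0 addSn modS1 //.
  rewrite {2}(divn_eq a f).
  have -> : (f - a %% f + (a %/ f * f + a %% f) = (a %/ f).+1 * f)%N.
    rewrite mulSn; lia.
  by rewrite modnMl.
have e2 : ((j0 + b) %% f == 1)%N.
  have := PP_t f (j0 + b) hf; rewrite -HP PP_t // e1.
  by case: ifP => // _ /eqP.
have : (j0 + b == j0 + a %[mod f])%N by rewrite (eqP e1) (eqP e2).
rewrite eqn_modDl eqn_mod_dvd ?(ltnW hab) // => /dvdnP [q hq].
move: hb; rewrite /ell; case: ifP => hodd hb.
  clear -hq hab hb hf ha; case: q hq => [|q] hq; rewrite ?mul0n ?mulSn in hq; lia.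
have hq1 : q = 1%N by clear -hq hab hb hf ha; case: q hq => [|[|q]] hq; nia.
have hb' : b = (a + f)%N by lia.
have := HP 0%N; rewrite !add0n hb' => /(congr1 fst).
rewrite PP_f ?hodd //; by case: (PP f a).1.
Qed.

Lemma LB f a b : (1 < f)%N -> (1 <= b)%N -> (b < ell f)%N ->
  (forall j, Fm f j a = Fm f j.+1 b) -> False.
Proof.
move=> hf hb1 hb H.
have eq1 : acomp (PP f a) (false, -1) = PP f (1 + b).
  by rewrite -Fm_P PP1 // -(PP1 f hf) -[PP f a]/(Fm f 0 a) H.
have eq2 : acomp (Fm f 2 b) (false, -1) = PP f (1 + a).
  by rewrite -(PP1 f hf) -H Fm_P.
have eq3 : acomp (Fm f 2 b) (true, 0) = PP f (2 + b).
  by rewrite -(PP2 f hf) Fm_P.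
move: eq1; rewrite /acomp /=.
case sa : (PP f a).1 => /= eq1.
-
  have ht : (PP f (1 + b)).2 = 0 /\ (PP f a).2 = -1.
    have h := congr1 snd eq1.
    by case: (tvals f a hf) => h1; case: (tvals f (1 + b) hf) => h2;
       rewrite h1 h2 in h *; rewrite /= in h; lia.
  case: ht => ht1 ht2.
  have hsb : (PP f (1 + b)).1 = true by rewrite -(congr1 fst eq1).
  have ha1 : (a %% f == 1)%N by move: ht2; rewrite PP_t //; case: ifP.
  have hta : (PP f (1 + a)).2 = 0.
    by rewrite PP_t // add1n modS1 // (eqP ha1).
  move: eq2 eq3; case: (Fm f 2 b) => x1 x2 eq2 eq3.
  have hx2 : x2 = (PP f (2 + b)).2.
    by rewrite -(congr1 snd eq3) /acomp /=; by case: x1 {eq2 eq3}; rewrite ?oppr0 addr0.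
  have hx1 : ~~ x1 = (PP f (2 + b)).1.
    by rewrite -(congr1 fst eq3) /acomp /= addbT.
  have h2 : x2 + (if x1 then 1 else -1) = (PP f (1 + a)).2.
    by rewrite -(congr1 snd eq2) /acomp /=; case: x1 {eq2 eq3 hx1}; rewrite ?opprK.
  rewrite hta in h2.
  case: (tvals f (2 + b) hf) => h3; rewrite h3 in hx2.
  + have hx1t : x1 = true.
      by move: h2; rewrite hx2; case: x1 {eq2 eq3 hx1} => //= h; lia.
    have hmod : ((2 + b) %% f == 1)%N.
      by move: h3; rewrite PP_t //; case: ifP.
    move: hmod; rewrite add2n modS1 // => hmod.
    by move: hx1; rewrite hx1t -[(2 + b)%N]/((1 + b).+1) PP_s hsb add1n (eqP hmod).
  + by move: h2; rewrite hx2; case: x1 {eq2 eq3 hx1} => //= h; lia.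
-
  have ht : (PP f (1 + b)).2 = -1 /\ (PP f a).2 = 0.
    have h := congr1 snd eq1.
    by case: (tvals f a hf) => h1; case: (tvals f (1 + b) hf) => h2; rewrite h1 h2 in h *; rewrite /= in h; lia.
  case: ht => ht1 ht2.
  have hsb : (PP f (1 + b)).1 = false by rewrite -(congr1 fst eq1).
  have hmod : ((1 + b) %% f == 1)%N by move: ht1; rewrite PP_t //; case: ifP.
  move: hmod; rewrite add1n modS1 // => /dvdnP [q hq].
  move: hb; rewrite /ell; case: ifP => hodd hb.
    by clear -hq hb hb1; case: q hq => [|q] hq; rewrite ?mul0n ?mulSn in hq; lia.
  have hq1 : q = 1%N.
    by clear -hq hb hb1; case: q hq => [|[|q]] hq; rewrite ?mul0n ?mulSn in hq; lia.
  move: hsb; rewrite add1n hq hq1 mul1n -addn1 addnC PP_f ?hodd // PP1 //.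
Qed.

Definition cc (p : nat) : int := p%:Z - 1.
Definition poly_of (c : int) (u : aff) : {poly int} :=
  if u.1 then (u.2 + c)%:P - 'X else u.2%:P + 'X.

Lemma poly_of_comp c u v : poly_of c u \Po poly_of c v = poly_of c (acomp u v).
Proof.
case: u => [[] a]; case: v => [[] b]; rewrite /poly_of /acomp /=;
  rewrite ?comp_polyB ?comp_polyD ?comp_polyC ?comp_polyX ?rmorphD ?rmorphN ?rmorphB /=.
all: ring.
Qed.

Lemma poly_of_inj c u v : poly_of c u = poly_of c v -> u = v.
Proof.
move=> h; have h1 := congr1 (fun q : {poly int} => q`_1) h.
have h0 := congr1 (fun q : {poly int} => q`_0) h.
move: h0 h1; case: u {h} => [[] a]; case: v => [[] b];
  rewrite /poly_of /= ?coefB ?coefD !coefC !coefX /= => h0 h1; try lia.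
- congr pair; lia.
- congr pair; lia.
Qed.

Lemma mu_eq p f : mu p f = [ffun j : 'I_f => poly_of (cc p) (mm f j)].
Proof.
apply/ffunP => j; rewrite !ffunE /mm modn_small //.
case: eqP => _; first by rewrite /poly_of /= rmorphN /=; ring.
case: eqP => _; rewrite /poly_of /cc /=; congr (_%:P - _); ring.
Qed.

Lemma gpow_eq p f k :
  gpow k (mu p f) = [ffun j : 'I_f => poly_of (cc p) (mm f (j + k))].
Proof.
elim: k => [|k IH].
  by rewrite /gpow /= mu_eq; apply/ffunP => j; rewrite !ffunE addn0.
rewrite /gpow iterS -/(gpow k (mu p f)) IH; apply/ffunP => j.
by rewrite /gshift !ffunE /= /mm !modnDml addSnnS.
Qed.

Lemma muk_eq p f k : (0 < k)%N ->
  muk p f k = [ffun j : 'I_f => poly_of (cc p) (Fm f j k)].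
Proof.
case: k => // k _; elim: k => [|k IH].
  by rewrite (_ : muk p f 1 = mu p f) // mu_eq; apply/ffunP => j; rewrite !ffunE /= addn0 acomp1.
rewrite (_ : muk p f k.+2 = Defs.pcomp (gpow k.+1 (mu p f)) (muk p f k.+1)) // IH gpow_eq; apply/ffunP => j.
by rewrite /Defs.pcomp !ffunE poly_of_comp.
Qed.

Lemma Fm_modS f j k : Fm f (j %% f).+1 k = Fm f j.+1 k.
Proof. by rewrite -[LHS]Fm_mod -[RHS]Fm_mod -(addn1 (j %% f)) modnDml addn1. Qed.

Lemma gmuk_eq p f k : (0 < k)%N ->
  gshift (muk p f k) = [ffun j : 'I_f => poly_of (cc p) (Fm f j.+1 k)].
Proof.
move=> hk; apply/ffunP => j; rewrite /gshift !ffunE muk_eq // ffunE /=.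
by rewrite Fm_mod.
Qed.

Lemma ffun_nat f (hf : (0 < f)%N) c (F G : nat -> aff) :
  (forall j, F (j %% f)%N = F j) -> (forall j, G (j %% f)%N = G j) ->
  [ffun j : 'I_f => poly_of c (F j)] = [ffun j : 'I_f => poly_of c (G j)] ->
  forall j, F j = G j.
Proof.
move=> hF hG e j; rewrite -hF -hG.
have := congr1 (fun h : {ffun 'I_f -> {poly int}} => h (Ordinal (ltn_pmod j hf))) e; rewrite !ffunE /=.
exact: poly_of_inj.
Qed.

Theorem lemma2p2 (p f : nat) (hp : prime p) (hf : (1 < f)%N) :
  size (mu_list p f) = (2 * ell f - 1)%N /\
  uniq (mu_list p f) /\
  (forall lam, lam \in mu_list p f -> in_Zpmx lam).
Proof.
have hf0 : (0 < f)%N by lia.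
have hl : (2 <= ell f)%N by rewrite /ell; case: ifP; lia.
have -> : mu_list p f =
  [seq [ffun j : 'I_f => poly_of (cc p) (Fm f j k)] | k <- iota 1 (ell f)] ++
  [seq [ffun j : 'I_f => poly_of (cc p) (Fm f j.+1 k)] | k <- iota 1 (ell f).-1].
  rewrite /mu_list; congr (_ ++ _); apply/eq_in_map => k; rewrite mem_iota => /andP [hk _].
    exact: muk_eq.
  exact: gmuk_eq.
split; first by rewrite size_cat !size_map !size_iota; lia.
split.
  rewrite cat_uniq; apply/and3P; split.
  - rewrite map_inj_in_uniq ?iota_uniq // => a b; rewrite !mem_iota => /andP [ha1 ha2] /andP [hb1 hb2] e.
    have H := ffun_nat _ hf0 _ _ _ (fun j => Fm_mod f j a) (fun j => Fm_mod f j b) e.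
    case: (ltngtP a b) => // hab.
      by exfalso; apply: (LA _ _ _ hf _ hab _ H); lia.
    by exfalso; apply: (LA _ _ _ hf _ hab _ (fun j => esym (H j))); lia.
  - apply/hasPn => x /mapP [b hb ->]; apply/negP => /mapP [a ha e].
    move: ha hb; rewrite !mem_iota => /andP [ha1 ha2] /andP [hb1 hb2].
    have H := ffun_nat _ hf0 _ _ _ (fun j => Fm_mod f j a) (fun j => Fm_modS f j b) (esym e).
    by apply: (LB _ _ _ hf _ _ H); lia.
  - rewrite map_inj_in_uniq ?iota_uniq // => a b; rewrite !mem_iota => /andP [ha1 ha2] /andP [hb1 hb2] e.
    have H := ffun_nat _ hf0 _ _ _ (fun j => Fm_modS f j a) (fun j => Fm_modS f j b) e.
    have H' : forall j, Fm f j a = Fm f j b.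
      move=> j; rewrite -(Fm_mod f j a) -(Fm_mod f j b).
      rewrite -(modnDr j f) (_ : (j + f = (j + f.-1).+1)%N); last by lia.
      by rewrite !Fm_mod H.
    case: (ltngtP a b) => // hab.
      by exfalso; apply: (LA _ _ _ hf _ hab _ H'); lia.
    by exfalso; apply: (LA _ _ _ hf _ hab _ (fun j => esym (H' j))); lia.
move=> lam; rewrite mem_cat => /orP [] /mapP [k _ ->] j; rewrite ffunE /poly_of.
- by case: (Fm f j k) => [[] b] /=; [exists (b + cc p); right | exists b; left].
- by case: (Fm f j.+1 k) => [[] b] /=; [exists (b + cc p); right | exists b; left].
Qed.
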